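(* Let $M>0$, $0<\delta\le+\infty$, and $\zeta:(0,\delta)\to(0,\infty)$ with $\lim_{\lambda\to0}\zeta(\lambda)/\lambda=0$. Let $(u_n)_{n\ge0}$ be nonnegative numbers with $u_0\le M$ and $$u_{n+1}\le(1-\lambda)u_n+M\zeta(\lambda)\qquad\text{for all }n\ge0\text{ and all }\lambda\in(0,\delta).$$ Define $\zeta^*(u):=\sup_{\lambda\in(0,\delta)}(\lambda u-\zeta(\lambda))\in(-\infty,+\infty]$, $F(u):=\int_u^1\frac{dv}{\zeta^*(v)}$ for $u\in(0,1]$ (with $1/\zeta^*(v):=0$ when $\zeta^*(v)=+\infty$), and $F^{-1}(t):=\inf\{u\in(0,1]:F(u)\le t\}$. Then $u_n\le M\,F^{-1}(n)$ for all integers $n\ge0$. *)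

(* Defs.v *)
From HB Require Import structures.
From mathcomp Require Import all_boot all_order all_algebra.
From mathcomp Require Import all_classical all_reals all_analysis.
Set Implicit Arguments. Unset Strict Implicit. Unset Printing Implicit Defensive.
Import Order.TTheory GRing.Theory Num.Theory.
Import numFieldNormedType.Exports.
Local Open Scope classical_set_scope.
Local Open Scope ring_scope.

Definition dom_ (R : realType) (delta : \bar R) : set R :=
  [set l : R | 0 < l /\ (l%:E < delta)%E].

Definition zeta_star (R : realType) (delta : \bar R) (zeta : R -> R) (u : R) : \bar R :=
  ereal_sup [set ((l * u - zeta l)%:E) | l in dom_ delta].

Definition ereal_recip (R : realType) (x : \bar R) : R :=
  match x with
  | EFin r => r^-1
  | _ => 0
  end.

Definition Ffun (R : realType) (delta : \bar R) (zeta : R -> R) (u : R) : \bar R :=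
  (\int[lebesgue_measure]_(v in `[u, 1%R]) (ereal_recip (zeta_star delta zeta v))%:E)%E.

Definition Finv (R : realType) (delta : \bar R) (zeta : R -> R) (t : R) : R :=
  inf [set u : R | 0 < u <= 1 /\ (Ffun delta zeta u <= t%:E)%E].

(* Main.v *)
Require Import Defs.
From HB Require Import structures.
From mathcomp Require Import all_boot all_order all_algebra.
From mathcomp Require Import all_classical all_reals all_analysis.
From mathcomp Require Import ring lra measurable_realfun.
Set Implicit Arguments. Unset Strict Implicit. Unset Printing Implicit Defensive.
Import Order.TTheory GRing.Theory Num.Theory.
Import numFieldNormedType.Exports.
Local Open Scope classical_set_scope.
Local Open Scope ring_scope.

Lemma near_delta (R : realType) (delta : \bar R) :
  (0 < delta)%E -> \forall l \near (0:R)^'+, (l%:E < delta)%E.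
Proof.
case: delta => [d| |] d0 //.
- rewrite lte_fin in d0; near=> l; rewrite lte_fin; near: l.
  exact: nbhs_right_lt.
- by near=> l; rewrite ltey.
Unshelve. all: by end_near. Qed.

Lemma keyK (R : realType) (delta : \bar R) (zeta : R -> R) :
  (0 < delta)%E -> (fun l => zeta l / l) @ 0^'+ --> 0 ->
  forall e, 0 < e -> exists l, [/\ dom_ delta l, l < 1 & zeta l < e * l].
Proof.
move=> d0 /cvgrPdist_lt cz e e0.
have [l [[[l0 l1] ld] lz]] := filter_ex (filterI (filterI
   (filterI (nbhs_right_gt (0:R)) (nbhs_right_lt (ltr01 : (0:R) < 1))) (near_delta d0))
   (cz e e0)).
exists l; split => //.
move: lz; rewrite sub0r normrN => /(le_lt_trans (ler_norm _)).
by rewrite ltr_pdivrMr.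
Qed.

Lemma zs_ge (R : realType) (delta : \bar R) (zeta : R -> R) v l :
  dom_ delta l -> ((l * v - zeta l)%:E <= zeta_star delta zeta v)%E.
Proof. by move=> dl; apply: ereal_sup_ubound; exists l. Qed.

Lemma zs_le (R : realType) (delta : \bar R) (zeta : R -> R) v c :
  (forall l, dom_ delta l -> l * v - zeta l <= c) ->
  (zeta_star delta zeta v <= c%:E)%E.
Proof. by move=> H; apply: ge_ereal_sup => _ [l dl <-]; rewrite lee_fin; exact: H. Qed.

Lemma zs_mono (R : realType) (delta : \bar R) (zeta : R -> R) v w :
  v <= w -> (zeta_star delta zeta v <= zeta_star delta zeta w)%E.
Proof.
move=> vw; apply: ge_ereal_sup => _ [l dl <-].
apply: le_trans (zs_ge _ _ dl); rewrite lee_fin lerD2r ler_wpM2l //.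
by case: dl => /ltW.
Qed.

Definition KH (R : realType) (delta : \bar R) (zeta : R -> R) :=
  forall e, 0 < e -> exists l, [/\ dom_ delta l, l < 1 & zeta l < e * l].

Lemma zs_pos (R : realType) (delta : \bar R) (zeta : R -> R) v :
  KH delta zeta -> 0 < v -> (0 < zeta_star delta zeta v)%E.
Proof.
move=> K v0; have [l [dl _ zl]] := K v v0.
apply: lt_le_trans (@zs_ge _ delta zeta v l dl); rewrite lte_fin subr_gt0 mulrC //.
Qed.

Lemma f_ge0 (R : realType) (delta : \bar R) (zeta : R -> R) v :
  KH delta zeta -> 0 < v -> 0 <= ereal_recip (zeta_star delta zeta v).
Proof.
move=> K v0; have := zs_pos K v0.
case: (zeta_star delta zeta v) => [z| |] //=; rewrite lte_fin => z0.
by rewrite invr_ge0 ltW.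
Qed.

Lemma f_anti (R : realType) (delta : \bar R) (zeta : R -> R) v w :
  KH delta zeta -> 0 < v -> v <= w ->
  ereal_recip (zeta_star delta zeta w) <= ereal_recip (zeta_star delta zeta v).
Proof.
move=> K v0 vw; have w0 := lt_le_trans v0 vw.
have := @zs_mono _ delta zeta _ _ vw; have := zs_pos K v0; have := zs_pos K w0.
case: (zeta_star delta zeta w) => [w'| |] //=;
  case: (zeta_star delta zeta v) => [v'| |] //=.
- rewrite !lte_fin lee_fin => w0' v0' vw'.
  by rewrite lef_pV2 ?posrE.
- by rewrite lte_fin => _ v0' _; rewrite invr_ge0 ltW.
Qed.

Lemma f_meas (R : realType) (delta : \bar R) (zeta : R -> R) a (D : set R) :
  KH delta zeta -> 0 < a -> measurable D -> D `<=` [set v | a <= v] ->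
  measurable_fun D (fun v => (ereal_recip (zeta_star delta zeta v))%:E).
Proof.
move=> K a0 mD Da.
apply/(measurable_EFinP D (fun v => ereal_recip (zeta_star delta zeta v))).
apply: (@eq_measurable_fun _ _ _ _ D
  (fun v => ereal_recip (zeta_star delta zeta (Num.max a v)))).
  by move=> v; rewrite inE => /Da /= av; rewrite max_r.
apply: nonincreasing_measurable => // x y xy.
apply: f_anti => //; first by rewrite lt_max a0.
exact: le_max2.
Qed.

Lemma Fsplit (R : realType) (delta : \bar R) (zeta : R -> R) a b z :
  KH delta zeta -> 0 < a -> a <= b -> b <= 1 ->
  zeta_star delta zeta b = z%:E ->
  (((b - a) / z)%:E + Ffun delta zeta b <= Ffun delta zeta a)%E.
Proof.
move=> K a0 ab b1 zb.
have z0 : 0 < z by have := zs_pos K (lt_le_trans a0 ab); rewrite zb lte_fin.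
have eqs : `[a, 1]%classic = `[a, b[%classic `|` `[b, 1]%classic.
  by apply: itv_bndbnd_setU; rewrite bnd_simp.
have sub : `[a, 1]%classic `<=` [set v | a <= v].
  by move=> v /=; rewrite in_itv /= => /andP[].
rewrite /Ffun eqs ge0_integral_setU //=; first last.
- apply/disj_setPS => v [] /=; rewrite !in_itv /= => /andP[_ vb] /andP[bv _].
  by move: (lt_le_trans vb bv); rewrite ltxx.
- move=> w Hv; have av : a <= w.
    by case: Hv => /=; rewrite in_itv /= => /andP[] // bv _; exact: le_trans bv.
  by rewrite lee_fin f_ge0 //; exact: lt_le_trans av.
- by rewrite -eqs; apply: (f_meas K a0) => //.
apply: leeD => //.
have -> : ((b - a) / z)%:E =
   (\int[lebesgue_measure]_(v in `[a, b[) (cst (z^-1)%:E) v)%E.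
  rewrite integral_cst //= lebesgue_measure_itv /= lte_fin.
  case: ltgtP ab => // [ab' _|-> _]; last by rewrite subrr mul0r mule0.
  by rewrite -EFinD -EFinM mulrC.
apply: ge0_le_integral => //.
- by move=> v _; rewrite lee_fin invr_ge0 ltW.
- apply: (f_meas K a0) => //= w /andP[aw _].
  by move: aw; rewrite bnd_simp.
- move=> v /= /andP[]; rewrite !bnd_simp => av vb.
  rewrite lee_fin -[z^-1]/(ereal_recip (z%:E)) -zb.
  apply: f_anti => //; first exact: lt_le_trans av.
  exact: ltW.
Qed.

Theorem lemma4p11 (R : realType) (M : R) (delta : \bar R) (zeta : R -> R)
    (u : nat -> R) :
  0 < M -> (0 < delta)%E ->
  (forall l, dom_ delta l -> 0 < zeta l) ->
  (fun l => zeta l / l) @ 0^'+ --> 0 ->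
  (forall n, 0 <= u n) ->
  u 0%N <= M ->
  (forall n l, dom_ delta l -> u n.+1 <= (1 - l) * u n + M * zeta l) ->
  forall n : nat, u n <= M * Finv delta zeta n%:R.
Proof.
move=> M0 d0 zpos zlim u0 uM hyp.
have K : KH delta zeta by exact: keyK.
pose v := fun k => u k / M.
have v0 k : 0 <= v k by rewrite /v divr_ge0 // ltW.
have hv k l : dom_ delta l -> v k.+1 <= (1 - l) * v k + zeta l.
  move=> dl; rewrite /v ler_pdivrMr //.
  have -> : ((1 - l) * (u k / M) + zeta l) * M = (1 - l) * u k + M * zeta l.
    by field; rewrite gt_eqF.
  exact: hyp.
have v1 k : v k <= 1.
  elim: k => [|k IH]; first by rewrite /v ler_pdivrMr // mul1r.
  have [l [dl l1 zl]] := K 1 ltr01.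
  apply: le_trans (hv k l dl) _.
  have : (1 - l) * v k <= 1 - l.
    by rewrite -[X in _ <= X]mulr1 ler_wpM2l // subr_ge0 ltW.
  rewrite mul1r in zl; lra.
have zsb k : (zeta_star delta zeta (v k) <= (v k - v k.+1)%:E)%E.
  apply: zs_le => l dl; have := hv k l dl; lra.
have zsfin k : 0 < v k ->
    exists z, [/\ zeta_star delta zeta (v k) = z%:E, 0 < z & z <= v k - v k.+1].
  move=> vk0; have := zs_pos K vk0; have := zsb k.
  by case: (zeta_star delta zeta (v k)) => [z| |] //=; rewrite lee_fin lte_fin => h1 h2; exists z.
have vstep k a : 0 < a -> a <= v k.+1 -> a < v k.
  move=> a0 ak; have [l [dl l1 zl]] := K a a0.
  have h := hv k l dl.
  have : (1 - l) * a < (1 - l) * v k by lra.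
  by rewrite ltr_pM2l // subr_gt0.
have P k : forall a, 0 < a -> a <= v k -> (k%:R%:E <= Ffun delta zeta a)%E.
  elim: k => [|k IH] a a0 ak.
    rewrite /Ffun; apply: integral_ge0 => w /=; rewrite in_itv /= => /andP[aw _].
    by rewrite lee_fin f_ge0 // (lt_le_trans a0 aw).
  have avk := vstep k a a0 ak; have vk0 : 0 < v k := lt_trans a0 avk.
  have [z [ez z0 zle]] := zsfin k vk0.
  apply: le_trans (Fsplit K a0 (ltW avk) (v1 k) ez).
  rewrite -natr1 EFinD [X in (_ <= X)%E]addeC; apply: leeD.
    exact: IH (le_refl _).
  rewrite lee_fin ler_pdivlMr // mul1r; lra.
move=> n.
have -> : u n = M * v n by rewrite /v mulrC divfK // gt_eqF.
rewrite ler_pM2l //.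
rewrite /Finv; apply: lb_le_inf.
  exists 1; split; first by rewrite ltr01 lexx.
  by rewrite /Ffun set_itv1 integral_set1 lee_fin ler0n.
move=> w [/andP[w0 w1] Fw]; rewrite leNgt; apply/negP => wv.
have vn0 : 0 < v n := lt_trans w0 wv.
have [z [ez z0 zle]] := zsfin n vn0.
have h1 := Fsplit K w0 (ltW wv) (v1 n) ez.
have h2 := P n (v n) vn0 (le_refl _).
have pos : 0 < (v n - w) / z by rewrite divr_gt0 // subr_gt0.
have h3 : (n%:R%:E < ((v n - w) / z)%:E + n%:R%:E)%E.
  by rewrite -EFinD lte_fin ltrDr.
have := lt_le_trans h3 (le_trans (leeD (le_refl _) h2) (le_trans h1 Fw)).
by rewrite ltxx.
Qed.
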